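(* Let $i\ge1$ and $n=4i$. Every ceiling coalition of the $i$-bit roof game $G_{i\text{-bit}}$ on players $\{1,\dots,n\}$ has at most two distinct direct left-shifts.
   Context: Players are $N=\{1,\dots,n\}$, $n=4i$. A coalition $S'$ is a direct left-shift of $S$ if there is $m\in S$, $2\le m\le n$, $m-1\notin S$, with $S'=(S\setminus\{m\})\cup\{m-1\}$; a left-shift of $S$ is obtained by one or more successive direct left-shifts. For $k\in\{0,\dots,2^i-1\}$ with $i$-bit binary representation $b_1\cdots b_i$, $S_{k,i}=\bigcup_{j=1}^iB_j$ where $B_j=\{4(j-1)+2,4(j-1)+3\}$ if $b_j=0$ and $B_j=\{4(j-1)+1,4(j-1)+4\}$ if $b_j=1$. The $i$-bit roof game $G_{i\text{-bit}}$ is the simple game on $N$ in which a coalition is winning iff it contains some $S_{k,i}$ or a left-shift of some $S_{k,i}$ (a canonical linear game whose roof coalitions are exactly the $S_{k,i}$). A maximal losing coalition is a losing $S$ with $S\cup\{m\}$ winning for all $m\notin S$; a ceiling coalition is a maximal losing coalition all of whose left-shifts are winning. *)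

(* Defs.v *)
(* Players 1..n are represented by ordinals p : 'I_n,
   the ordinal p standing for player p+1. Coalitions are {set 'I_n}. *)
From mathcomp Require Import all_boot.
Set Implicit Arguments. Unset Strict Implicit. Unset Printing Implicit Defensive.

Section Roof.
Variable n : nat.

Definition direct_left_shift (S S' : {set 'I_n}) : bool :=
  [exists m : 'I_n, exists m' : 'I_n,
     [&& m'.+1 == m :> nat, m \in S, m' \notin S & S' == m' |: (S :\ m)]].

Definition left_shift (S S' : {set 'I_n}) : bool :=
  [exists T, direct_left_shift S T && connect direct_left_shift T S'].
End Roof.

(* Bit b_j (j = 1..i) of the i-bit binary representation b_1...b_i of k
   (b_1 most significant); here indexed by j0 = j-1 in 0..i-1. *)
Definition bitj (i k j0 : nat) : bool := odd (k %/ 2 ^ (i - j0.+1)).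

(* Block B_j, j = j0+1: players {4(j-1)+2, 4(j-1)+3} if b_j = 0 and
   {4(j-1)+1, 4(j-1)+4} if b_j = 1; as ordinals (player - 1). *)
Definition block (i k j0 : nat) : {set 'I_(4 * i)} :=
  [set p : 'I_(4 * i) | (p : nat) \in
     (if bitj i k j0 then [:: 4 * j0; 4 * j0 + 3]
                     else [:: 4 * j0 + 1; 4 * j0 + 2])].

Definition roof (i k : nat) : {set 'I_(4 * i)} := \bigcup_(j0 < i) block i k j0.

Definition winning (i : nat) (S : {set 'I_(4 * i)}) : bool :=
  [exists k : 'I_(2 ^ i), exists T : {set 'I_(4 * i)},
     ((T == roof i k) || left_shift (roof i k) T) && (T \subset S)].

Definition maximal_losing (i : nat) (S : {set 'I_(4 * i)}) : bool :=
  ~~ winning S && [forall m : 'I_(4 * i), (m \notin S) ==> winning (m |: S)].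

Definition ceiling (i : nat) (S : {set 'I_(4 * i)}) : bool :=
  maximal_losing S && [forall S' : {set 'I_(4 * i)}, left_shift S S' ==> winning S'].

(* Main.v *)
Require Import Defs.
From mathcomp Require Import all_boot.
From mathcomp Require Import zify.
Set Implicit Arguments. Unset Strict Implicit. Unset Printing Implicit Defensive.

Section Cnt.
Variable n : nat.
Implicit Types A B R T : {set 'I_n}.

Definition memn A (t : nat) : bool := [exists x : 'I_n, (val x == t) && (x \in A)].
Definition cnt A (t : nat) : nat := \sum_(x < t) memn A x.

Lemma memn_ord A (x : 'I_n) : memn A x = (x \in A).
Proof.
apply/existsP/idP => [[y /andP[/eqP e h]]|h]; last by exists x; rewrite eqxx.
by have -> : x = y by apply: val_inj.
Qed.

Lemma memn_ge A t : n <= t -> memn A t = false.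
Proof.
move=> h; apply/existsP => -[y /andP[/eqP e _]].
change (nat_of_ord y = t) in e; have := ltn_ord y; lia.
Qed.

Lemma cnt0 A : cnt A 0 = 0. Proof. by rewrite /cnt big_ord0. Qed.
Lemma cntS A t : cnt A t.+1 = cnt A t + memn A t.
Proof. by rewrite /cnt big_ord_recr. Qed.

Lemma cnt_mono A u v : u <= v -> cnt A u <= cnt A v.
Proof.
elim: v => [|v IH]; first by rewrite leqn0 => /eqP->.
rewrite leq_eqVlt => /orP[/eqP->//|]; rewrite ltnS => /IH h.
rewrite cntS; lia.
Qed.

Lemma cnt_lip A t : cnt A t.+1 <= (cnt A t).+1.
Proof. rewrite cntS; case: (memn A t) => /=; lia. Qed.

Lemma cnt_ge A t : n <= t -> cnt A t = cnt A n.
Proof.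
elim: t => [|t IH]; first by rewrite leqn0 => /eqP->.
rewrite leq_eqVlt => /orP[/eqP->//|]; rewrite ltnS => h.
by rewrite cntS memn_ge // addn0 IH.
Qed.

Lemma cnt_le_n A t : cnt A t <= cnt A n.
Proof. case: (leqP t n) => h; [exact: cnt_mono | by rewrite cnt_ge // ltnW]. Qed.

Lemma cnt_sub A B t : A \subset B -> cnt A t <= cnt B t.
Proof.
move=> /subsetP sAB; rewrite /cnt; apply: leq_sum => x _.
case hA: (memn A x) => //; move/existsP: hA => [y /andP[e yA]].
have -> // : memn B x by apply/existsP; exists y; rewrite e sAB.
Qed.

Lemma memn_eq_cnt A B : (forall t, cnt A t = cnt B t) -> A = B.
Proof.
move=> h; apply/setP => x; rewrite -!memn_ord.
have := h (val x).+1; rewrite !cntS h => /addnI.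
by case: (memn A x); case: (memn B x).
Qed.

Lemma cnt_gap A u v : cnt A u < cnt A v -> exists x, [/\ u <= x, x < v & memn A x].
Proof.
elim: v => [|v IH]; first by rewrite cnt0.
rewrite cntS; case hm: (memn A v) => /=.
  case: (ltnP (cnt A u) (cnt A v)) => h2 h3.
    by case: (IH h2) => x [h4 h5 h6]; exists x; split => //; lia.
  exists v; split => //; case: (leqP u v) => // hv.
  have := cnt_mono A hv; rewrite cntS hm /=; lia.
rewrite addn0 => /IH [x [h4 h5 h6]]; exists x; split => //; lia.
Qed.

Lemma cnt_flat A u v : u <= v -> (forall x, u <= x -> x < v -> ~~ memn A x) ->
  cnt A v = cnt A u.
Proof.
elim: v => [|v IH]; first by rewrite leqn0 => /eqP->.
rewrite leq_eqVlt => /orP[/eqP->//|]; rewrite ltnS => huv h.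
rewrite cntS (negbTE (h v _ _)) // addn0 IH // => x h1 h2.
apply: h => //; lia.
Qed.

Definition sh A (a : nat) : {set 'I_n} :=
  [set x : 'I_n | ((x \in A) && (val x != a)) || (val x == a.-1)].

Lemma sh_eq A (m m' : 'I_n) : m'.+1 = m -> sh A m = m' |: (A :\ m).
Proof.
move=> e; apply/setP => x; rewrite !inE -!val_eqE /= -e /=.
by rewrite orbC andbC.
Qed.

Lemma memn_sh A a t : 0 < a < n ->
  memn (sh A a) t = if t == a then false else if t == a.-1 then true else memn A t.
Proof.
move=> /andP[a0 an]; case: (ltnP t n) => ht.
  have e1 : memn (sh A a) t = (Ordinal ht \in sh A a) by rewrite -memn_ord.
  have e2 : memn A t = (Ordinal ht \in A) by rewrite -memn_ord.
  rewrite e1 e2 inE /=.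
  case E: (t == a) => /=.
    rewrite andbF /=; apply/negbTE/eqP; move/eqP: E; lia.
  rewrite andbT.
  by case: (t == a.-1); rewrite ?orbT ?orbF.
rewrite !memn_ge //.
have -> : (t == a) = false by apply/negbTE/eqP; lia.
have -> : (t == a.-1) = false by apply/negbTE/eqP; lia.
by [].
Qed.

Lemma cnt_sh A a t : 0 < a < n -> memn A a -> ~~ memn A a.-1 ->
  cnt (sh A a) t = cnt A t + (t == a).
Proof.
move=> ha hm hm'; have a0 : 0 < a by case/andP: ha.
elim: t => [|t IH].
  rewrite !cnt0; have -> : (0 == a) = false by apply/negbTE/eqP; lia.
  by [].
rewrite !cntS IH memn_sh //.
have [->|ta] := eqVneq t a.
  by rewrite hm (gtn_eqF (ltnSn a)).
have [tb|tb] := eqVneq t a.-1.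
  have -> : t.+1 == a by apply/eqP; lia.
  by rewrite tb (negbTE hm').
have -> : (t.+1 == a) = false by apply/negbTE/eqP; move/eqP: tb; lia.
by rewrite /= !addn0.
Qed.

Lemma dls_sh A B : direct_left_shift A B ->
  exists a, [/\ 0 < a < n, memn A a, ~~ memn A a.-1 & B = sh A a].
Proof.
case/existsP => m /existsP [m' /and4P [/eqP e mA m'A /eqP ->]].
exists m; split.
- by apply/andP; split; [rewrite -e | exact: ltn_ord].
- by rewrite memn_ord.
- by rewrite -e /= memn_ord.
- by rewrite (sh_eq A e).
Qed.

Lemma shift_cnt A B : direct_left_shift A B -> forall t, cnt A t <= cnt B t.
Proof.
move=> /dls_sh [a [ha hm hm' ->]] t; rewrite cnt_sh //; exact: leq_addr.
Qed.

Lemma ls_cnt A B : left_shift A B -> forall t, cnt A t <= cnt B t.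
Proof.
case/existsP => C /andP [hAC /connectP [p hp ->]] t.
have : cnt A t <= cnt C t by exact: shift_cnt.
elim: p C {hAC} hp => [|c p IH] C //= /andP [hCc hp] h.
apply: IH hp _; apply: leq_trans h _; exact: shift_cnt.
Qed.

Lemma sum_eq_ind (N m : nat) : \sum_(t < N) ((t : nat) == m : nat) = (m < N).
Proof.
elim: N => [|N IH]; first by rewrite big_ord0.
rewrite big_ord_recr /= IH; lia.
Qed.

Lemma step R T : R != T -> (forall t, cnt R t <= cnt T t) -> cnt T n <= cnt R n ->
  exists R', [/\ direct_left_shift R R', forall t, cnt R' t <= cnt T t,
    cnt T n <= cnt R' n &
    \sum_(t < n.+1) cnt R' t = (\sum_(t < n.+1) cnt R t).+1].
Proof.
move=> hRT hdom hn.
have hex : exists t, cnt R t != cnt T t.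
  case: (boolP [exists x, (x \in R) != (x \in T)]) => [/existsP[x hx]|/existsPn h].
    case: (eqVneq (cnt R x) (cnt T x)) => e; last by exists x.
    exists x.+1; rewrite !cntS e !memn_ord eqn_add2l.
    by move: hx; case: (x \in R); case: (x \in T).
  case/negP: hRT; apply/eqP/setP => x; move: (h x).
  by case: (x \in R); case: (x \in T).
case: (ex_minnP hex) => p hp hmin.
case: p hp hmin => [|p'] hp hmin; first by rewrite !cnt0 in hp.
have e' : cnt R p' = cnt T p'.
  by apply/eqP/negP => /negP /hmin; rewrite ltnn.
have hlt : cnt R p'.+1 < cnt T p'.+1 by rewrite ltn_neqAle hp hdom.
have hRp : memn R p' = false.
  by move: hlt; rewrite !cntS e'; case: (memn R p') => // h; exfalso; lia.
have hex2 : exists x, (p'.+1 <= x) && memn R x.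
  have : cnt R p'.+1 < cnt R n.
    apply: leq_trans hlt _; apply: leq_trans hn; exact: cnt_le_n.
  by case/cnt_gap => x [h1 h2 h3]; exists x; rewrite h1 h3.
have hxn : forall x, (p'.+1 <= x) && memn R x -> x < n.
  move=> x /andP[_ hx]; case: (ltnP x n) => // hx'; by rewrite memn_ge in hx.
case: (ex_minnP hex2) => m /andP [hpm hmR] hmmin.
have hmn : m < n by apply: hxn; rewrite hpm hmR.
have hm0 : 0 < m by lia.
have hmR' : ~~ memn R m.-1.
  have [->|hne] := eqVneq m p'.+1; first by rewrite /= hRp.
  apply/negP => h; have := hmmin m.-1; rewrite h andbT.
  have -> : p'.+1 <= m.-1 by lia.
  move=> /(_ isT); lia.
have hflat : cnt R m = cnt R p'.+1.
  apply: cnt_flat => // x h1 h2; apply/negP => h3.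
  have := hmmin x; rewrite h1 h3 => /(_ isT); lia.
have hstrict : cnt R m < cnt T m.
  rewrite hflat; apply: leq_trans hlt _; exact: cnt_mono.
have ham : 0 < m < n by rewrite hm0 hmn.
exists (sh R m); split.
- have hm1 : m.-1 < n by lia.
  apply/existsP; exists (Ordinal hmn); apply/existsP; exists (Ordinal hm1).
  rewrite -!memn_ord /= hmR hmR'.
  have hh : m.-1.+1 = m by rewrite prednK.
  rewrite hh eqxx /=.
  by rewrite (@sh_eq R (Ordinal hmn) (Ordinal hm1)).
- move=> t; rewrite cnt_sh //; case: eqP => [->|_]; [by rewrite addn1 | by rewrite addn0].
- by rewrite cnt_sh //; apply: leq_trans hn (leq_addr _ _).
- rewrite (eq_bigr (fun t : 'I_n.+1 => cnt R t + ((t : nat) == m))); last first.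
    by move=> t _; rewrite cnt_sh.
  by rewrite big_split /= sum_eq_ind ltnS ltnW // addn1.
Qed.

Lemma reach A T : (forall t, cnt A t <= cnt T t) -> cnt T n <= cnt A n ->
  (A == T) || left_shift A T.
Proof.
suff H : forall d R, \sum_(t < n.+1) cnt T t - \sum_(t < n.+1) cnt R t < d ->
   (forall t, cnt R t <= cnt T t) -> cnt T n <= cnt R n -> (R == T) || left_shift R T.
  by apply: H; apply: ltnSn.
elim => // d IH R hd hdom hn.
case: (eqVneq R T) => [->|hRT]; first by [].
case: (step hRT hdom hn) => R' [hd' hdom' hn' hsum].
have hle : \sum_(t < n.+1) cnt R' t <= \sum_(t < n.+1) cnt T t.
  by apply: leq_sum => t _.
have hd2 : \sum_(t < n.+1) cnt T t - \sum_(t < n.+1) cnt R' t < d by lia.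
case/orP: (IH R' hd2 hdom' hn') => [/eqP <-|hls]; apply/orP; right.
- apply/existsP; exists R'; by rewrite hd' connect0.
- case/existsP: hls => C /andP [h1 h2]; apply/existsP; exists R'.
  by rewrite hd' /=; apply: connect_trans (connect1 h1) h2.
Qed.

End Cnt.

Lemma W1 i (S : {set 'I_(4 * i)}) : winning S ->
  exists k, k < 2 ^ i /\ forall t, cnt (roof i k) t <= cnt S t.
Proof.
case/existsP => k /existsP [T /andP [hT hTS]]; exists k; split => // t.
apply: leq_trans (cnt_sub t hTS).
case/orP: hT => [/eqP->//|/ls_cnt]; apply.
Qed.

Lemma W2 i (S : {set 'I_(4 * i)}) k : k < 2 ^ i ->
  (forall t, cnt (roof i k) t <= cnt S t) -> winning S.
Proof.
move=> hk hdom; set R := roof i k; set N := cnt R (4 * i).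
set T := [set x in S | cnt S x < N].
have hT : forall t, cnt T t = minn (cnt S t) N.
  elim => [|t IH]; first by rewrite !cnt0 min0n.
  have hm : memn T t = memn S t && (cnt S t < N).
    case: (ltnP t (4 * i)) => ht; last by rewrite !memn_ge.
    have e1 : memn T t = (Ordinal ht \in T) by rewrite -memn_ord.
    have e2 : memn S t = (Ordinal ht \in S) by rewrite -memn_ord.
    by rewrite e1 e2 inE.
  rewrite !cntS IH hm; case: (memn S t); case: ltnP => h /=; lia.
apply/existsP; exists (Ordinal hk); apply/existsP; exists T.
apply/andP; split; last by apply/subsetP => x; rewrite inE => /andP[].
have := @reach (4 * i) R T _ _; rewrite /= eq_sym; apply.
- by move=> t; rewrite hT leq_min hdom cnt_le_n.
- by rewrite hT geq_minr.
Qed.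

Lemma memn_roof i k t : t < 4 * i ->
  memn (roof i k) t = (t %% 4 \in (if bitj i k (t %/ 4) then [:: 0; 3] else [:: 1; 2])).
Proof.
move=> ht.
have -> : memn (roof i k) t = (Ordinal ht \in roof i k) by rewrite -memn_ord.
rewrite /roof; apply/bigcupP/idP.
- case => j0 _; rewrite /block inE /= => hx.
  have hj : t %/ 4 = j0.
    by move: hx; case: bitj; rewrite !inE => /orP[] /eqP; lia.
  rewrite hj; move: hx; case: bitj; rewrite !inE => /orP[] /eqP h;
    apply/orP; [left|right|left|right]; apply/eqP; lia.
- move=> hx; have hj : t %/ 4 < i by lia.
  exists (Ordinal hj) => //; rewrite /block inE /=.
  move: hx; case: bitj; rewrite !inE => /orP[] /eqP h;
    apply/orP; [left|right|left|right]; apply/eqP; lia.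
Qed.

Lemma memn_roof_r i k j r : j < i -> r < 4 ->
  memn (roof i k) (4 * j + r) = (r \in if bitj i k j then [:: 0; 3] else [:: 1; 2]).
Proof.
move=> hj hr; rewrite memn_roof; last lia.
have -> : (4 * j + r) %/ 4 = j by lia.
have -> : (4 * j + r) %% 4 = r by lia.
by [].
Qed.

Lemma cnt_roof_vals i k j : j < i ->
  [/\ cnt (roof i k) (4 * j + 1) = cnt (roof i k) (4 * j) + bitj i k j,
      cnt (roof i k) (4 * j + 2) = cnt (roof i k) (4 * j) + 1,
      cnt (roof i k) (4 * j + 3) = cnt (roof i k) (4 * j) + 1 + ~~ bitj i k j &
      cnt (roof i k) (4 * j.+1) = cnt (roof i k) (4 * j) + 2].
Proof.
move=> hj.
have m0 := @memn_roof_r i k j 0 hj isT.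
have m1 := @memn_roof_r i k j 1 hj isT.
have m2 := @memn_roof_r i k j 2 hj isT.
have m3 := @memn_roof_r i k j 3 hj isT.
rewrite addn0 in m0.
have e1 : 4 * j + 1 = (4 * j).+1 by lia.
have e2 : 4 * j + 2 = (4 * j + 1).+1 by lia.
have e3 : 4 * j + 3 = (4 * j + 2).+1 by lia.
have e4 : 4 * j.+1 = (4 * j + 3).+1 by lia.
rewrite e4 cntS e3 cntS e2 cntS e1 cntS -e1 -e2 -e3 m0 m1 m2 m3.
by case: (bitj i k j) => /=; split; lia.
Qed.

Lemma roof_cnt i k j : j <= i -> cnt (roof i k) (4 * j) = 2 * j.
Proof.
elim: j => [|j IH] hj; first by rewrite muln0 cnt0.
have hj' : j < i by lia.
case: (cnt_roof_vals k hj') => _ _ _ ->; rewrite IH; lia.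
Qed.

Lemma bits_exist i (b : nat -> bool) :
  exists k, k < 2 ^ i /\ forall j, j < i -> bitj i k j = b j.
Proof.
elim: i => [|i [k [hk hb]]]; first by exists 0.
have hbi : (b i : nat) <= 1 by case: (b i).
exists (k * 2 + b i); split; first by rewrite expnS; lia.
move=> j hj; rewrite /bitj.
case: (ltngtP j i) => h; last 1 first.
- rewrite h subnn expn0 divn1 oddD oddM andbF /=; by case: (b i).
- have -> : i.+1 - j.+1 = (i - j.+1).+1 by lia.
  rewrite expnS divnMA (_ : (k * 2 + b i) %/ 2 = k); last by case: (b i) hbi => /=; lia.
  exact: hb.
- lia.
Qed.

Theorem lemma3 (i : nat) (hi : 1 <= i) (S : {set 'I_(4 * i)}) :
  ceiling S -> #|[set S' | direct_left_shift S S']| <= 2.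
Proof.
case/andP => /andP [hlose _] /forallP hls.
have hw : forall S', direct_left_shift S S' -> exists a,
    [/\ 0 < a < 4 * i, S' = sh S a &
     exists k, k < 2 ^ i /\ forall t, cnt (roof i k) t <= cnt S t + (t == a)].
  move=> S' h; have := hls S'.
  have -> : left_shift S S' by apply/existsP; exists S'; rewrite h connect0.
  move=> /= hwin; case: (dls_sh h) => a [ha hm hm' eS]; exists a; split => //.
  rewrite eS in hwin; case: (W1 hwin) => k [hk hd]; exists k; split => // t.
  by rewrite -cnt_sh.
suff [a [b hab]] : exists a b, forall S', direct_left_shift S S' ->
    S' = sh S a \/ S' = sh S b.
  apply: leq_trans (_ : #|[set sh S a; sh S b]| <= 2).
    apply: subset_leq_card; apply/subsetP => S'; rewrite inE => /hab [->|->];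
      by rewrite !inE eqxx ?orbT.
  by rewrite cards2; case: (_ != _).
case: (boolP [exists j : 'I_i.+1, cnt S (4 * j) < 2 * j]) => [/existsP [j hj]|/existsPn hB].
  exists (4 * j), (4 * j) => S' /hw [a [ha -> [k [hk hd]]]]; left.
  have := hd (4 * j); rewrite roof_cnt; last by have := ltn_ord j; lia.
  case: eqP => [<-//|_]; move=> h; exfalso; lia.
have hB' : forall j, j <= i -> 2 * j <= cnt S (4 * j).
  move=> j hj; have hj' : j < i.+1 by lia.
  by move: (hB (Ordinal hj')); rewrite -leqNgt.
set f := cnt S.
have hmono : forall u v, u <= v -> f u <= f v by move=> u v; exact: cnt_mono.
have hlip : forall t, f t.+1 <= (f t).+1 by move=> t; exact: cnt_lip.
pose good0 j := (2 * j + 1 <= f (4 * j + 2)) && (2 * j + 2 <= f (4 * j + 3)).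
pose good1 j := (2 * j + 1 <= f (4 * j + 1)) && (2 * j + 1 <= f (4 * j + 3)).
case: (boolP [exists j : 'I_i, ~~ good0 j && ~~ good1 j]) => [/existsP [j /andP [g0 g1]]|/existsPn hall].
  exists (4 * j + 1), (4 * j + 3) => S' /hw [a [ha -> [k [hk hd]]]].
  case: (cnt_roof_vals k (ltn_ord j)) => v1 v2 v3 _.
  have hc : cnt (roof i k) (4 * j) = 2 * j by apply: roof_cnt; apply: ltnW.
  have d1 := hd (4 * j + 1); have d2 := hd (4 * j + 2); have d3 := hd (4 * j + 3).
  have l3 : f (4 * j + 3) <= (f (4 * j + 2)).+1.
    have -> : 4 * j + 3 = (4 * j + 2).+1 by lia. exact: hlip.
  have [->|n1] := eqVneq a (4 * j + 1); first by left.
  have [->|n3] := eqVneq a (4 * j + 3); first by right.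
  exfalso; move: g0 g1 d1 d2 d3; rewrite /good0 /good1 v1 v2 v3 hc -/f.
  case: (bitj i k j) => /=; lia.
case: (bits_exist i (fun j => ~~ good0 j)) => k [hk hb].
case/negP: hlose; apply: (W2 hk) => t.
case: (leqP (4 * i) t) => ht.
  rewrite cnt_ge // roof_cnt //; apply: leq_trans (hB' i (leqnn i)) (cnt_mono _ ht).
have hj : t %/ 4 < i by lia.
have et : t = 4 * (t %/ 4) + t %% 4 by lia.
have hr : t %% 4 < 4 by lia.
rewrite et; move: (t %/ 4) (t %% 4) hj hr => j r hj hr.
have hc : cnt (roof i k) (4 * j) = 2 * j by apply: roof_cnt; apply: ltnW.
have := hall (Ordinal hj); rewrite /= => hg.
have hbj := hb j hj.
case: (cnt_roof_vals k hj) => v1 v2 v3 _.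
have hB0 := hB' j (ltnW hj).
have m01 := hmono (4 * j) (4 * j + 1) (leq_addr _ _).
have m12 : f (4 * j + 1) <= f (4 * j + 2) by apply: hmono; lia.
have m23 : f (4 * j + 2) <= f (4 * j + 3) by apply: hmono; lia.
rewrite -/f in hB0.
move: hg; rewrite /good0 /good1 in hbj *.
case: r hr => [|[|[|[|r]]]] hr //; rewrite ?addn0 ?v1 ?v2 ?v3 ?hc ?hbj -/f; lia.
Qed.
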